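(* Let $n,g,k$ be integers with $k\ge 1$ and $2\leq g\leq \left\lfloor \frac{n-k-2}{2}\right\rfloor$, with $(n-k)g$ even. Let $F_1,F_2$ be two connected $g$-regular graphs with $|V(F_1)|+|V(F_2)|=n-k$, and let $K_{1,k-1}$ be a star with center $v$. Let $F^k_n$ be a graph obtained from the disjoint union of $F_1$, $F_2$ and $K_{1,k-1}$ by adding exactly one edge from $v$ to $F_1$ and exactly one edge from $v$ to $F_2$. Then $\kappa^g(F^k_n)=k$.
   Context: For a connected graph $G=(V,E)$ and integer $g\ge0$: a set $F\subseteq V$ is a $g$-good-neighbor faulty set if $|N(v)\cap (V-F)|\geq g$ for every $v\in V-F$; a $g$-good-neighbor cut is such an $F$ with $G-F$ disconnected; $\kappa^g(G)$ is the minimum cardinality of a $g$-good-neighbor cut. *)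

(* Defs.v *)
From mathcomp Require Import all_boot.
Set Implicit Arguments. Unset Strict Implicit. Unset Printing Implicit Defensive.

Definition simple_graph (T : finType) (e : rel T) : Prop :=
  symmetric e /\ irreflexive e.

Definition connected_graph (T : finType) (e : rel T) : Prop :=
  forall x y : T, connect e x y.

Definition nbhd (T : finType) (e : rel T) (x : T) : {set T} := [set y | e x y].

Definition regular (T : finType) (e : rel T) (g : nat) : Prop :=
  forall x : T, #|nbhd e x| = g.

Definition induced_rel (T : finType) (e : rel T) (S : {set T}) : rel T :=
  [rel x y | [&& e x y, x \in S & y \in S]].

Definition connected_on (T : finType) (e : rel T) (S : {set T}) : Prop :=
  forall x y, x \in S -> y \in S -> connect (induced_rel e S) x y.

Definition good_neighbor_faulty (T : finType) (e : rel T) (g : nat) (F : {set T}) : Prop :=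
  forall v, v \notin F -> g <= #|nbhd e v :&: ~: F|.

Definition good_neighbor_cut (T : finType) (e : rel T) (g : nat) (F : {set T}) : Prop :=
  good_neighbor_faulty e g F /\ ~ connected_on e (~: F).

Definition kappa_g_eq (T : finType) (e : rel T) (g m : nat) : Prop :=
  (exists F : {set T}, good_neighbor_cut e g F /\ #|F| = m) /\
  (forall F : {set T}, good_neighbor_cut e g F -> m <= #|F|).

(* The graph F^k_n: vertices V(F1) + V(F2) + star K_{1,k-1};
   the star has center [inr None] and leaves [inr (Some i)], i : 'I_(k-1);
   extra edges: center -- a (a in F1) and center -- b (b in F2). *)
Definition Fkn_vertex (T1 T2 : finType) (k : nat) : finType :=
  ((T1 + T2) + option 'I_(k.-1))%type.

Arguments Fkn_vertex : clear implicits.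
Definition Fkn_rel (T1 T2 : finType) (e1 : rel T1) (e2 : rel T2) (k : nat)
    (a : T1) (b : T2) : rel (Fkn_vertex T1 T2 k) :=
  fun x y =>
  match x, y with
  | inl (inl u), inl (inl w) => e1 u w
  | inl (inr u), inl (inr w) => e2 u w
  | inr None, inr (Some _) => true
  | inr (Some _), inr None => true
  | inr None, inl (inl u) => u == a
  | inl (inl u), inr None => u == a
  | inr None, inl (inr u) => u == b
  | inl (inr u), inr None => u == b
  | _, _ => false
  end.
Arguments Fkn_rel [T1 T2] e1 e2 k a b.

(* Main.v *)
Require Import Defs.
From mathcomp Require Import all_boot.

Lemma lift_connect (A B : finType) (f : A -> B) (e : rel A) (e' : rel B) :
  (forall x y, e x y -> e' (f x) (f y)) ->
  forall x y, connect e x y -> connect e' (f x) (f y).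
Proof.
move=> H x _ /connectP[p ep ->]; elim: p x ep => [|z p IH] x /=.
  by rewrite connect0.
case/andP=> exz /IH; apply: connect_trans; apply: connect1; exact: H.
Qed.

Lemma inv_connect (B : finType) (e : rel B) (P : pred B) :
  (forall x y, e x y -> P x -> P y) ->
  forall x y, connect e x y -> P x -> P y.
Proof.
move=> H x _ /connectP[p ep ->]; elim: p x ep => [|z p IH] x //=.
case/andP=> exz /IH Hp Px; apply: Hp; exact: H Px.
Qed.

Theorem lemma4p1 (n g k : nat) (T1 T2 : finType) (e1 : rel T1) (e2 : rel T2)
    (a : T1) (b : T2) :
  1 <= k ->
  2 <= g -> g <= (n - k - 2) %/ 2 ->
  ~~ odd ((n - k) * g) ->
  simple_graph e1 -> simple_graph e2 ->
  connected_graph e1 -> connected_graph e2 ->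
  regular e1 g -> regular e2 g ->
  #|T1| + #|T2| = n - k ->
  kappa_g_eq (Fkn_rel e1 e2 k a b) g k.
Proof.
move=> k1 g2 _ _ _ _ c1 c2 r1 r2 _.
set e := Fkn_rel e1 e2 k a b.
set S : {set Fkn_vertex T1 T2 k} := [set x | if x is inr _ then true else false].
set L : {set Fkn_vertex T1 T2 k} := [set x | if x is inr (Some _) then true else false].
have cardS : #|S| = k.
  have -> : S = (@inr (T1 + T2)%type _) @: [set: option 'I_k.-1].
    apply/setP=> x; rewrite !inE; case: x => [x|x] /=.
      by apply/esym/imsetP=> -[y _].
    by rewrite imset_f.
  rewrite card_imset; last by move=> ? ? [].
  by rewrite cardsT card_option card_ord prednK.
have cardL : #|L| = k.-1.
  have -> : L = (fun i => @inr (T1 + T2)%type _ (Some i)) @: [set: 'I_k.-1].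
    apply/setP=> x; rewrite !inE; case: x => [x|[x|]] /=.
    - by apply/esym/imsetP=> -[y _].
    - by rewrite imset_f.
    - by apply/esym/imsetP=> -[y _].
  rewrite card_imset; last by move=> ? ? [].
  by rewrite cardsT card_ord.
split.
  exists S; split => //; split.
    move=> v; rewrite inE /=; case: v => [[u|u]|//] _.
    - rewrite -(r1 u).
      have <- : #|(fun w => @inl _ (option 'I_k.-1) (@inl _ T2 w)) @: nbhd e1 u| = #|nbhd e1 u|.
        by apply: card_imset => ? ? [].
      apply: subset_leq_card; apply/subsetP=> y /imsetP[w]; rewrite !inE => ew ->.
      by rewrite /e /= ew.
    - rewrite -(r2 u).
      have <- : #|(fun w => @inl _ (option 'I_k.-1) (@inr T1 _ w)) @: nbhd e2 u| = #|nbhd e2 u|.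
        by apply: card_imset => ? ? [].
      apply: subset_leq_card; apply/subsetP=> y /imsetP[w]; rewrite !inE => ew ->.
      by rewrite /e /= ew.
  move=> /(_ (inl (inl a)) (inl (inr b))); rewrite !inE /= => /(_ isT isT) C.
  set P := (fun x : Fkn_vertex T1 T2 k => if x is inl (inl _) then true else false).
  have H : forall x y, induced_rel e (~: S) x y -> P x -> P y.
    move=> x y; rewrite /induced_rel /P /e /= !inE.
    by case: x => [[x|x]|[x|]]; case: y => [[y|y]|[y|]] => //=; rewrite andbF.

  by have := @inv_connect _ _ P H _ _ C isT.
move=> F [gF dF].
have LF : L \subset F.
  apply/subsetP=> x; rewrite inE; case: x => [//|[i|//]] _.
  apply/negPn/negP=> /gF; rewrite leqNgt => /negP; apply; apply: (leq_ltn_trans _ g2).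
  have -> : nbhd e (inr (Some i)) = [set inr None].
    by apply/setP=> y; rewrite !inE; case: y => [[y|y]|[y|]].
  by rewrite (leq_trans (subset_leq_card (subsetIl _ _))) // cards1.
have FL : F != L.
  apply/eqP=> FLe; apply: dF; rewrite FLe.
  set c : Fkn_vertex T1 T2 k := inr None.
  have Hc : c \in ~: L by rewrite !inE.
  have Ha : forall x, x \in ~: L -> connect (induced_rel e (~: L)) x c /\ connect (induced_rel e (~: L)) c x.
    move=> x; rewrite !inE; case: x => [[u|u]|[//|]] _; last by rewrite connect0.
    - split.
        apply: (connect_trans (y := inl (inl a))); last by apply: connect1; rewrite /induced_rel /e /c /= ?inE /= ?eqxx.
        apply: (@lift_connect _ _ (fun w : T1 => (inl (inl w) : Fkn_vertex T1 T2 k)) e1 _ _ u a (c1 u a)) => x y exy.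
        by rewrite /induced_rel /e /= ?inE exy.
      apply: (connect_trans (y := inl (inl a))); first by apply: connect1; rewrite /induced_rel /e /c /= ?inE /= ?eqxx.
      apply: (@lift_connect _ _ (fun w : T1 => (inl (inl w) : Fkn_vertex T1 T2 k)) e1 _ _ a u (c1 a u)) => x y exy.
      by rewrite /induced_rel /e /= ?inE exy.
    - split.
        apply: (connect_trans (y := inl (inr b))); last by apply: connect1; rewrite /induced_rel /e /c /= ?inE /= ?eqxx.
        apply: (@lift_connect _ _ (fun w : T2 => (inl (inr w) : Fkn_vertex T1 T2 k)) e2 _ _ u b (c2 u b)) => x y exy.
        by rewrite /induced_rel /e /= ?inE exy.
      apply: (connect_trans (y := inl (inr b))); first by apply: connect1; rewrite /induced_rel /e /c /= ?inE /= ?eqxx.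
      apply: (@lift_connect _ _ (fun w : T2 => (inl (inr w) : Fkn_vertex T1 T2 k)) e2 _ _ b u (c2 b u)) => x y exy.
      by rewrite /induced_rel /e /= ?inE exy.
  move=> x y /Ha[xc _] /Ha[_ cy]; exact: connect_trans xc cy.
have : L \proper F by rewrite properEneq eq_sym FL LF.
move/proper_card; rewrite cardL.
move: #|F| => m; move: k1; clear; by case: k.
Qed.
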